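(* Fix an integer $b\ge2$ and $0<\alpha<1$. Let $C_\alpha=\tfrac{10}{3}\alpha^{-1}\log_2 10-\alpha^{-1}\log_2(1-2^{-\alpha})+2\alpha^{-1}-1$ and let $\ell_0\in\mathbb{N}$ satisfy $b^{\ell_0}>\max\{\frac{20}{b^{1-\alpha}-1},\,40C_\alpha b^{2C_\alpha(1-\alpha)}\}$. Put $\ell=b^{-\ell_0}$ and, for $i\in\{0,\dots,b^{\ell_0+3}-1\}$, $r_i=ib^{-\ell_0-3}$, $s_i=r_i+\ell$, and $g_i(x)=\overline{h}_\ell\big(x-\tfrac12(r_i+s_i-1)\big)$ (a $1$-periodic function). Then for all $x<y$ in $\mathbb{R}$ with $y-x<b^{-\ell_0-1}$ there exists $i\in\{0,\dots,b^{\ell_0+3}-1\}$ such that $$W^{\alpha,b}_{g_i}(y)-W^{\alpha,b}_{g_i}(x)\ge \tfrac{7}{10}\,b^{\alpha\ell_0-2(1-\alpha)}\,(y-x)^\alpha.$$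
   Context: For $0<\ell\le\tfrac12$, $h_\ell\colon[0,1)\to\mathbb{R}$ is defined by $h_\ell(x)=-\frac{x}{1-\ell}$ for $0\le x<\tfrac12(1-\ell)$, $h_\ell(x)=\frac{x}{\ell}-\frac{1}{2\ell}$ for $\tfrac12(1-\ell)\le x<\tfrac12(1+\ell)$, and $h_\ell(x)=\frac{1-x}{1-\ell}$ for $\tfrac12(1+\ell)\le x<1$; and $\overline{h}_\ell(x)=h_\ell(x-\lfloor x\rfloor)$ is its $1$-periodic extension to $\mathbb{R}$ (a continuous piecewise linear function with values in $[-\tfrac12,\tfrac12]$). For a $1$-periodic Lipschitz $g$, $W_g^{\alpha,b}(x)=\sum_{k=0}^\infty b^{-\alpha k}g(b^kx)$. *)

(* Defs.v *)
From Stdlib Require Import Reals Lra.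
From Coquelicot Require Import Coquelicot.
Open Scope R_scope.

Definition rfloor (x : R) : R := IZR (up x) - 1.

Definition h_ell (l x : R) : R :=
  if Rlt_dec x ((1 - l) / 2) then - x / (1 - l)
  else if Rlt_dec x ((1 + l) / 2) then x / l - 1 / (2 * l)
  else (1 - x) / (1 - l).

Definition hbar (l x : R) : R := h_ell l (x - rfloor x).

Definition Wfun (alpha b : R) (g : R -> R) (x : R) : R :=
  Series (fun k : nat => Rpower b (- alpha * INR k) * g (b ^ k * x)).

Definition log2 (x : R) : R := ln x / ln 2.

Definition C_alpha (alpha : R) : R :=
  10 / 3 / alpha * log2 10 - / alpha * log2 (1 - Rpower 2 (- alpha))
  + 2 / alpha - 1.

Definition g_i (b l0 i : nat) (x : R) : R :=
  let l := / (INR b ^ l0) in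
  let r := INR i / (INR b ^ (l0 + 3)) in
  let s := r + l in
  hbar l (x - (r + s - 1) / 2).

(* Main.v *)
Require Import Defs.
From Stdlib Require Import Reals.
From Coquelicot Require Import Coquelicot.
From Stdlib Require Import Lra Lia Psatz ZArith.
Open Scope R_scope.

Lemma rfloor_spec x : rfloor x <= x < rfloor x + 1.
Proof. unfold rfloor. destruct (archimed x) as [H1 H2]. lra. Qed.

Lemma rfloor_IZR x : rfloor x = IZR (up x - 1).
Proof. unfold rfloor. rewrite minus_IZR. reflexivity. Qed.

Lemma rfloor_unique x (n : Z) : IZR n <= x < IZR n + 1 -> rfloor x = IZR n.
Proof.
  intros [H1 H2]. unfold rfloor.
  assert (up x = (n + 1)%Z). { symmetry. apply tech_up; rewrite plus_IZR; simpl; lra. }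
  rewrite H, plus_IZR. simpl. lra.
Qed.

Lemma rfloor_mono x y : x <= y -> rfloor x <= rfloor y.
Proof.
  intros Hxy. destruct (rfloor_spec x) as [a1 a2]. destruct (rfloor_spec y) as [b1 b2].
  rewrite !rfloor_IZR in *.
  assert (IZR (up x - 1) < IZR (up y - 1) + 1) by lra.
  rewrite <- plus_IZR in H. apply lt_IZR in H. apply IZR_le. lia.
Qed.

Lemma rfloor_step x y : rfloor x < rfloor y -> rfloor x + 1 <= rfloor y.
Proof.
  rewrite !rfloor_IZR. intros H. apply lt_IZR in H. rewrite <- plus_IZR. apply IZR_le. lia.
Qed.

Lemma h_ell_bound l s : 0 < l < 1 -> 0 <= s < 1 -> Rabs (h_ell l s) <= / 2.
Proof.
  intros Hl Hs. unfold h_ell.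
  destruct (Rlt_dec s ((1 - l) / 2)) as [H1|H1].
  - apply Rabs_le. split.
    + apply Rmult_le_reg_r with (1 - l). lra. unfold Rdiv. field_simplify; lra.
    + assert (0 <= s / (1-l)) by (apply Rdiv_le_0_compat; lra). unfold Rdiv in *. lra.
  - destruct (Rlt_dec s ((1 + l) / 2)) as [H2|H2].
    + apply Rabs_le. assert (Hx : s / l - 1 / (2 * l) = (s - /2)/l) by (field; lra).
      rewrite Hx. split.
      * apply Rmult_le_reg_r with l. lra. unfold Rdiv. field_simplify; lra.
      * apply Rmult_le_reg_r with l. lra. unfold Rdiv. field_simplify; lra.
    + apply Rabs_le. split.
      * assert (0 <= (1 - s) / (1-l)) by (apply Rdiv_le_0_compat; lra). lra.
      * apply Rmult_le_reg_r with (1 - l). lra. unfold Rdiv. field_simplify; lra.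
Qed.

Definition Pf l s := h_ell l s + s / (1 - l).

Lemma Pf_range l s : 0 < l < 1 -> 0 <= s < 1 -> 0 <= Pf l s <= / (1 - l).
Proof.
  intros Hl Hs. unfold Pf, h_ell.
  destruct (Rlt_dec s ((1 - l) / 2)) as [H1|H1].
  - replace (- s / (1 - l) + s / (1 - l)) with 0 by (field; lra).
    split; [lra|]. left. apply Rinv_0_lt_compat; lra.
  - destruct (Rlt_dec s ((1 + l) / 2)) as [H2|H2].
    + replace (s / l - 1 / (2 * l) + s / (1 - l)) with ((s - (1-l)/2) / (l*(1-l))) by (field; lra).
      split.
      * apply Rdiv_le_0_compat; nra.
      * apply Rmult_le_reg_r with (l * (1 - l)). nra. unfold Rdiv. field_simplify; nra.
    + replace ((1 - s) / (1 - l) + s / (1 - l)) with (/ (1 - l)) by (field; lra).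
      split; [left; apply Rinv_0_lt_compat; lra | lra].
Qed.

Lemma Pf_mono l s1 s2 : 0 < l < 1 -> 0 <= s1 -> s1 <= s2 -> s2 < 1 -> Pf l s1 <= Pf l s2.
Proof.
  intros Hl H0 H12 H1. unfold Pf, h_ell.
  destruct (Rlt_dec s1 ((1 - l) / 2)) as [a1|a1];
  destruct (Rlt_dec s2 ((1 - l) / 2)) as [b1|b1]; try lra;
  try destruct (Rlt_dec s1 ((1 + l) / 2)) as [a2|a2];
  try destruct (Rlt_dec s2 ((1 + l) / 2)) as [b2|b2]; try lra;
  apply Rmult_le_reg_r with (l * (1 - l)); try nra;
  unfold Rdiv; field_simplify; try lra; try nra.
Qed.

Lemma hbar_bound l x : 0 < l < 1 -> Rabs (hbar l x) <= / 2.
Proof. intros Hl. unfold hbar. apply h_ell_bound; auto. destruct (rfloor_spec x); lra. Qed.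

Lemma hbar_H l x : 0 < l < 1 ->
  hbar l x + x / (1 - l) = Pf l (x - rfloor x) + rfloor x / (1 - l).
Proof. intros Hl. unfold hbar, Pf. field. lra. Qed.

Lemma hbar_slope l x y : 0 < l < 1 -> x <= y ->
  hbar l y - hbar l x >= - (y - x) / (1 - l).
Proof.
  intros Hl Hxy.
  assert (hbar l x + x / (1 - l) <= hbar l y + y / (1 - l)).
  { rewrite !hbar_H by auto.
    destruct (rfloor_spec x) as [a1 a2]. destruct (rfloor_spec y) as [b1 b2].
    assert (Fm := rfloor_mono x y Hxy).
    destruct (Rle_lt_or_eq_dec _ _ Fm) as [Hlt|Heq].
    - apply rfloor_step in Hlt.
      destruct (Pf_range l (x - rfloor x)) as [p1 p2]; auto. lra.
      destruct (Pf_range l (y - rfloor y)) as [q1 q2]; auto. lra.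
      assert (rfloor x / (1-l) + /(1-l) <= rfloor y / (1 - l)).
      { apply Rmult_le_reg_r with (1 - l). lra. unfold Rdiv. field_simplify; lra. }
      lra.
    - rewrite Heq. apply Rplus_le_compat_r. apply Pf_mono; auto; lra. }
  assert (- (y - x) / (1 - l) = x / (1-l) - y / (1-l)) by (field; lra). lra.
Qed.

Lemma hbar_steep l x (n : Z) : 0 < l < 1 ->
  IZR n + (1 - l) / 2 <= x <= IZR n + (1 + l) / 2 ->
  hbar l x = (x - IZR n - (1 - l) / 2) / l - / 2.
Proof.
  intros Hl Hx. unfold hbar.
  rewrite (rfloor_unique x n) by lra.
  unfold h_ell.
  destruct (Rlt_dec (x - IZR n) ((1 - l) / 2)); [lra|].
  destruct (Rlt_dec (x - IZR n) ((1 + l) / 2)).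
  - field. lra.
  - assert (x - IZR n = (1 + l)/2) by lra. rewrite H. field. lra.
Qed.

Lemma main_abs (G : R -> R) l p u v e :
  0 < l < 1 -> (forall a c, a <= c -> G c - G a >= - (c - a) / (1 - l)) ->
  (forall t, p <= t <= p + l -> G t = (t - p) / l - / 2) ->
  u <= v -> v - u <= l -> 0 <= e -> p - u <= e -> v - p - l <= e ->
  G v - G u >= (v - u) / l - e * (/ l + / (1 - l)).
Proof.
  intros Hl Hs Hst Huv Hd He H1 H2.
  assert (Ha : 0 < / l) by (apply Rinv_0_lt_compat; lra).
  assert (Hc : 0 < / (1 - l)) by (apply Rinv_0_lt_compat; lra).
  unfold Rdiv in *.
  set (a := / l) in *. set (c := / (1 - l)) in *.
  assert (Hsl : forall x y, x <= y -> G y - G x >= - (y - x) * c) by (intros; apply Hs; auto).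
  destruct (Rle_or_lt p u) as [Pu|Pu].
  - destruct (Rle_or_lt v (p + l)) as [Vp|Vp].
    + rewrite (Hst v), (Hst u) by lra. nra.
    + destruct (Rle_or_lt u (p + l)) as [Up|Up].
      * assert (A1 := Hsl (p + l) v ltac:(lra)).
        rewrite (Hst (p + l)) in A1 by lra. rewrite (Hst u) by lra.
        assert (a * l = 1) by (unfold a; field; lra). nra.
      * assert (A1 := Hsl u v Huv). nra.
  - destruct (Rle_or_lt p v) as [Pv|Pv].
    + assert (A1 := Hsl u p ltac:(lra)).
      rewrite (Hst p) in A1 by lra. rewrite (Hst v) by lra. nra.
    + assert (A1 := Hsl u v Huv). nra.
Qed.

Definition ell (b l0 : nat) : R := / (INR b ^ l0).
Definition rr (b l0 i : nat) : R := INR i / (INR b ^ (l0 + 3)).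

Lemma gi_slope b l0 i a c : 0 < ell b l0 < 1 -> a <= c ->
  g_i b l0 i c - g_i b l0 i a >= - (c - a) / (1 - ell b l0).
Proof.
  intros Hl Hac. unfold g_i. fold (ell b l0).
  match goal with |- hbar _ (c - ?k) - hbar _ (a - ?k) >= _ =>
    assert (H := hbar_slope (ell b l0) (a - k) (c - k) Hl ltac:(lra));
    replace (c - k - (a - k)) with (c - a) in H by ring end. exact H.
Qed.

Lemma gi_bound b l0 i t : 0 < ell b l0 < 1 -> Rabs (g_i b l0 i t) <= / 2.
Proof. intros Hl. unfold g_i. apply hbar_bound. exact Hl. Qed.

Lemma gi_steep b l0 i (n : Z) t : 0 < ell b l0 < 1 ->
  rr b l0 i + IZR n <= t <= rr b l0 i + IZR n + ell b l0 ->
  g_i b l0 i t = (t - (rr b l0 i + IZR n)) / ell b l0 - / 2.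
Proof.
  intros Hl Ht. unfold g_i. fold (ell b l0). fold (rr b l0 i).
  rewrite (hbar_steep _ _ n Hl).
  - f_equal. field. lra.
  - lra.
Qed.

Lemma exp_pow_INR x n : exp x ^ n = exp (INR n * x).
Proof.
  induction n as [|n IH].
  - simpl. rewrite Rmult_0_l, exp_0. reflexivity.
  - rewrite S_INR. simpl pow. rewrite IH, <- exp_plus. f_equal. ring.
Qed.

Lemma exp_upper x : x < 1 -> exp x <= / (1 - x).
Proof.
  intros H. assert (H1 := exp_ineq1_le (- x)).
  assert (exp x * exp (- x) = 1) by (rewrite <- exp_plus; replace (x + - x) with 0 by ring; apply exp_0).
  assert (0 < exp x) by apply exp_pos.
  apply Rmult_le_reg_r with (1 - x). lra. rewrite Rinv_l by lra. nra.
Qed.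

Lemma exp_upper8 x : x < 8 -> exp x <= (/ (1 - x / 8)) ^ 8.
Proof.
  intros H. replace x with (INR 8 * (x / 8)) at 1 by (simpl; field).
  rewrite <- exp_pow_INR. apply pow_incr. split. left; apply exp_pos.
  apply exp_upper. lra.
Qed.

Lemma ln_le_sub1 y : 0 < y -> ln y <= y - 1.
Proof. intros H. assert (H1 := exp_ineq1_le (ln y)). rewrite exp_ln in H1 by auto. lra. Qed.

Lemma ln2_gt : 2 / 3 < ln 2.
Proof.
  assert (exp (2/3) < 2).
  { replace (2/3) with (INR 16 * (1/24)) by (simpl; field). rewrite <- exp_pow_INR.
    apply Rle_lt_trans with ((/ (1 - 1/24)) ^ 16).
    - apply pow_incr. split. left; apply exp_pos. apply exp_upper. lra.
    - simpl. lra. }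
  rewrite <- (ln_exp (2/3)). apply ln_increasing. apply exp_pos. exact H.
Qed.

Lemma e_gt : 269 / 100 < exp 1.
Proof.
  replace 1 with (INR 64 * (1/64)) by (simpl; field). rewrite <- exp_pow_INR.
  apply Rlt_le_trans with ((1 + 1/64) ^ 64).
  - simpl. lra.
  - apply pow_incr. split. lra. apply exp_ineq1_le.
Qed.

Lemma ln_le_div_e z : 0 < z -> ln z <= z / exp 1.
Proof.
  intros H. assert (He := exp_pos 1).
  assert (ln z = ln (z / exp 1) + 1).
  { unfold Rdiv. rewrite ln_mult by (try apply Rinv_0_lt_compat; auto). rewrite ln_Rinv by auto. rewrite ln_exp. ring. }
  rewrite H0. assert (0 < z / exp 1) by (apply Rdiv_lt_0_compat; auto).
  assert (H2 := ln_le_sub1 _ H1). lra.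
Qed.

Lemma Rpower_tenth_pow a : 0 < a -> Rpower a (/ 10) ^ 10 = a.
Proof.
  intros H. unfold Rpower. rewrite exp_pow_INR.
  replace (INR 10 * (/ 10 * ln a)) with (ln a) by (simpl; field). apply exp_ln; auto.
Qed.

Lemma root_bound x a c : 0 <= x -> 0 <= c -> x ^ 10 = a -> a < c ^ 10 -> x < c.
Proof.
  intros Hx Hc Hxa Hac. destruct (Rlt_or_le x c) as [H|H]; auto.
  exfalso. assert (c ^ 10 <= x ^ 10) by (apply pow_incr; lra). lra.
Qed.

Lemma Rpower_pos a y : 0 < Rpower a y.
Proof. unfold Rpower. apply exp_pos. Qed.

Lemma tenth20 : Rpower 20 (/10) < 135/100.
Proof.
  apply (root_bound _ 20). left; apply Rpower_pos. lra.
  apply Rpower_tenth_pow; lra. simpl; lra.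
Qed.

Lemma tenth480 : Rpower 480 (/10) < 186/100.
Proof.
  apply (root_bound _ 480). left; apply Rpower_pos. lra.
  apply Rpower_tenth_pow; lra. simpl; lra.
Qed.

Lemma log2_10 : 33 / 10 <= log2 10.
Proof.
  unfold log2. assert (H2 := ln2_gt).
  assert (33 * ln 2 <= 10 * ln 10).
  { replace (33 * ln 2) with (INR 33 * ln 2) by (simpl; ring).
    replace (10 * ln 10) with (INR 10 * ln 10) by (simpl; ring).
    rewrite <- !ln_pow by lra. left. apply ln_increasing. apply pow_lt; lra. simpl; lra. }
  apply Rmult_le_reg_r with (ln 2). lra. replace (ln 10 / ln 2 * ln 2) with (ln 10) by (field; lra). lra.
Qed.

Lemma two_pow_neg a : 0 < a -> 0 < Rpower 2 (- a) < 1.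
Proof.
  intros H. split. apply Rpower_pos.
  rewrite <- (Rpower_O 2) by lra. apply Rpower_lt; lra.
Qed.

Definition Xa (a : R) := - log2 (1 - Rpower 2 (- a)).

Lemma Xa_nonneg a : 0 < a -> 0 <= Xa a.
Proof.
  intros H. destruct (two_pow_neg a H) as [K1 K2]. unfold Xa, log2.
  assert (ln (1 - Rpower 2 (-a)) < 0).
  { rewrite <- ln_1. apply ln_increasing; lra. }
  assert (H2 := ln2_gt).
  assert (ln (1 - Rpower 2 (- a)) / ln 2 < 0).
  { unfold Rdiv. apply Rmult_neg_pos; auto. apply Rinv_0_lt_compat; lra. }
  lra.
Qed.

Lemma Xa_ln a : 0 < a -> Xa a * ln 2 = - ln (1 - Rpower 2 (- a)).
Proof. intros H. unfold Xa, log2. assert (H2 := ln2_gt). field. lra. Qed.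

Lemma aC_bound a : 0 < a < 1 -> a * C_alpha a >= 12 + Xa a.
Proof.
  intros H. assert (H1 := log2_10).
  assert (a * C_alpha a = 10/3 * log2 10 + Xa a + 2 - a).
  { unfold C_alpha, Xa. field. lra. }
  lra.
Qed.

Lemma C_gt a : 0 < a < 1 -> 12 < C_alpha a.
Proof.
  intros H. assert (H1 := aC_bound a H). assert (H2 := Xa_nonneg a (proj1 H)).
  destruct (Rle_or_lt (C_alpha a) 12); auto. nra.
Qed.

Lemma inv_le a b : 0 < a -> a <= b -> / b <= / a.
Proof. intros. apply Rinv_le_contravar; auto. Qed.

Lemma exp_le x y : x <= y -> exp x <= exp y.
Proof. intros [H|H]. left; apply exp_increasing; auto. subst; lra. Qed.

Lemma numeric_core (lb a Lam C X B3 : R) :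
  ln 2 <= lb -> 0 < a < 1 -> 0 <= Lam -> 8 <= B3 ->
  12 < C -> a * C >= 12 + X -> 0 <= X -> X * ln 2 = - ln (1 - Rpower 2 (- a)) ->
  exp Lam > 20 / (exp ((1 - a) * lb) - 1) ->
  Lam > ln (40 * C) + 2 * C * ((1 - a) * lb) ->
  1 - / (2 * (1 - exp (- Lam)) * (B3 - 1))
    - exp (- a * Lam) * exp ((1 - a) * lb) / ((exp ((1 - a) * lb) - 1) * (1 - exp (- Lam)))
    - exp (- a * Lam) * exp ((1 - a) * lb) / (1 - exp (- a * lb))
  >= 7 / 10 / exp ((1 - a) * lb).
Proof.
  intros Hlb Ha HLam HB3 HC HaC HX HXl H1 H2.
  assert (L2 := ln2_gt).
  set (t := (1 - a) * lb) in *.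
  set (q := exp t) in *.
  assert (Ht : 0 < t) by (unfold t; nra).
  assert (Hq1 : 1 + t <= q) by apply exp_ineq1_le.
  set (l := exp (- Lam)). set (E := exp (- a * Lam)). set (th := exp (- a * lb)).
  assert (HE : 0 < E) by apply exp_pos.
  assert (Hl0 : 0 < l) by apply exp_pos.
  assert (HlL : l * exp Lam = 1).
  { unfold l. rewrite <- exp_plus. replace (- Lam + Lam) with 0 by ring. apply exp_0. }
  assert (H40 : ln 480 < ln (40 * C)) by (apply ln_increasing; lra).
  assert (HCt : 0 <= 2 * C * t) by nra.
  assert (Hln480 : 0 < ln 480) by (rewrite <- ln_1; apply ln_increasing; lra).
  assert (HL480 : 480 < exp Lam).
  { apply Rlt_trans with (40 * C). lra. rewrite <- (exp_ln (40 * C)) by lra.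
    apply exp_increasing. lra. }
  assert (Hl480 : l < / 480).
  { apply Rmult_lt_reg_r with (exp Lam). apply exp_pos. rewrite HlL. nra. }
  assert (HR4 : / (2 * (1 - l) * (B3 - 1)) <= 480 / 6706).
  { replace (480/6706) with (/ (6706/480)) by (field). apply inv_le. lra.
    nra. }
  assert (HK : / (1 - l) <= 480 / 479).
  { replace (480/479) with (/ (479/480)) by field. apply inv_le; lra. }
  assert (Hth0 : 0 < th) by apply exp_pos.
  assert (Hth2 : th <= Rpower 2 (- a)).
  { unfold th, Rpower. apply exp_le. nra. }
  assert (Hq0 : 0 < q) by apply exp_pos.
  assert (HT2 : E * q / ((q - 1) * (1 - l)) <= E * q / (q - 1) * (480 / 479)).
  { replace (E * q / ((q - 1) * (1 - l))) with (E * q / (q - 1) * / (1 - l)) by (field; lra).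
    apply Rmult_le_compat_l. apply Rdiv_le_0_compat; nra. exact HK. }
  assert (HaL : a * Lam > a * ln (40 * C) + 2 * (a * C) * t) by nra.
  destruct (Rle_or_lt (ln 2 / 2) t) as [CA|CB].
  -
    assert (Hq2 : 2 <= q * q).
    { unfold q. rewrite <- exp_plus. rewrite <- (exp_ln 2) by lra. apply exp_le. lra. }
    assert (HEb : E <= / q ^ 24 * (1 - Rpower 2 (- a))).
    { unfold E. destruct (two_pow_neg a ltac:(lra)) as [P1 P2].
      rewrite <- (exp_ln (1 - Rpower 2 (-a))) by lra.
      unfold q. rewrite exp_pow_INR, <- exp_Ropp, <- exp_plus. apply exp_le.
      assert (0 <= a * ln (40 * C)) by (apply Rmult_le_pos; lra).
      replace (ln (1 - Rpower 2 (- a))) with (- (X * ln 2)) by lra.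
      assert (X * ln 2 <= 2 * X * t) by nra.
      assert (2*(a*C)*t >= 2*(12+X)*t) by nra. simpl INR. lra. }
    assert (Hq24 : 4096 <= q ^ 24).
    { replace (q ^ 24) with ((q * q) ^ 12) by ring.
      apply Rle_trans with (2 ^ 12). simpl; lra. apply pow_incr. lra. }
    assert (Hqq : 1414 / 1000 <= q) by nra.
    destruct (two_pow_neg a ltac:(lra)) as [P1 P2].
    assert (HT3 : E * q / (1 - th) <= q / q ^ 24).
    { apply Rmult_le_reg_r with (1 - th). lra.
      replace (E * q / (1 - th) * (1 - th)) with (E * q) by (field; lra).
      assert (E * q <= / q ^ 24 * (1 - Rpower 2 (- a)) * q) by (apply Rmult_le_compat_r; lra).
      assert (0 < / q ^ 24) by (apply Rinv_0_lt_compat; lra).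
      unfold Rdiv. set (iq := / q ^ 24) in *.
      assert (0 < iq * q) by nra.
      assert (iq * q * (1 - Rpower 2 (- a)) <= iq * q * (1 - th)) by (apply Rmult_le_compat_l; lra).
      nra. }
    assert (Hq23 : q / q ^ 24 <= / 2048).
    { replace (q / q ^ 24) with (/ (q ^ 22 * q)) by (simpl; field; lra).
      apply inv_le. lra.
      assert (2^11 <= q^22) by (replace (q^22) with ((q*q)^11) by ring; apply pow_incr; lra).
      assert (q^22 <= q^22 * q) by (assert (0 <= q^22) by (apply pow_le; lra); nra).
      simpl in *; lra. }
    assert (HT2' : E * q / (q - 1) <= / 2048 * / (414/1000)).
    { unfold Rdiv. apply Rmult_le_compat. nra. left; apply Rinv_0_lt_compat; lra.
      assert (E * q <= / q ^ 24 * (1 - Rpower 2 (- a)) * q) by (apply Rmult_le_compat_r; lra).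
      assert (0 < / q ^ 24) by (apply Rinv_0_lt_compat; lra). unfold Rdiv in Hq23. nra.
      apply inv_le; lra. }
    assert (H7 : 7 / 10 / q <= 7/10 * / (1414/1000)).
    { unfold Rdiv at 2. apply Rmult_le_compat_l. lra. apply inv_le; lra. }
    lra.
  -
    assert (Ha2 : / 2 < a).
    { destruct (Rle_or_lt a (/ 2)) as [h|h]; auto.
      assert (/ 2 * lb <= (1 - a) * lb) by (apply Rmult_le_compat_r; lra).
      unfold t in CB. lra. }
    assert (Hqq : q * q < 2).
    { unfold q. rewrite <- exp_plus. rewrite <- (exp_ln 2) by lra. apply exp_increasing. lra. }
    assert (Hq14 : q < 14143 / 10000) by nra.
    destruct (Rle_or_lt a (9/10)) as [BM|BH].
    +
      assert (Ht15 : 1/15 <= t) by (unfold t; nra).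
      assert (Hq15 : 16/15 <= q) by lra.
      assert (Hsq : 0 < sqrt 480) by (apply sqrt_lt_R0; lra).
      assert (Hsq2 : 219/10 <= sqrt 480).
      { assert (sqrt 480 * sqrt 480 = 480) by (apply sqrt_sqrt; lra). nra. }
      assert (HEb : E <= / sqrt 480 * / q ^ 24).
      { unfold E. rewrite <- Rpower_sqrt by lra. rewrite <- Rpower_Ropp. unfold Rpower.
        unfold q. rewrite exp_pow_INR, <- exp_Ropp, <- exp_plus. apply exp_le.

        assert (/ 2 * ln 480 <= a * ln (40 * C)) by nra.
        simpl INR. nra. }
      assert (Hqp : (16/15)^23 <= q ^ 23) by (apply pow_incr; lra).
      assert (Hqp' : 441/100 <= q ^ 23) by (simpl in Hqp |- *; lra).
      assert (Hs2 : 14142/10000 <= sqrt 2).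
      { assert (sqrt 2 * sqrt 2 = 2) by (apply sqrt_sqrt; lra).
        assert (0 <= sqrt 2) by apply sqrt_pos. nra. }
      assert (Hth : th <= 7072/10000).
      { apply Rle_trans with (Rpower 2 (- a)). exact Hth2.
        apply Rle_trans with (Rpower 2 (- / 2)). apply Rle_Rpower; lra.
        rewrite Rpower_Ropp, Rpower_sqrt by lra.
        replace (7072/10000) with (/ (10000/7072)) by field. apply inv_le; lra. }
      assert (HEq : E * q <= / (219/10) * / (441/100)).
      { assert (E * q <= / sqrt 480 * / q ^ 24 * q) by (apply Rmult_le_compat_r; lra).
        replace (/ sqrt 480 * / q ^ 24 * q) with (/ sqrt 480 * / q ^ 23) in H by (simpl; field; lra).
        apply Rle_trans with (/ sqrt 480 * / q ^ 23). exact H.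
        apply Rmult_le_compat. left; apply Rinv_0_lt_compat; lra.
        left; apply Rinv_0_lt_compat; lra. apply inv_le; lra. apply inv_le; lra. }
      assert (HT2' : E * q / (q - 1) <= / (219/10) * / (441/100) * / (1/15)).
      { unfold Rdiv at 1. apply Rmult_le_compat. nra. left; apply Rinv_0_lt_compat; lra. exact HEq.
        apply inv_le; lra. }
      assert (HT3 : E * q / (1 - th) <= / (219/10) * / (441/100) * / (2928/10000)).
      { unfold Rdiv at 1. apply Rmult_le_compat. nra. left; apply Rinv_0_lt_compat; lra. exact HEq.
        apply inv_le; lra. }
      assert (H7 : 7 / 10 / q <= 7/10 * / (16/15)).
      { unfold Rdiv at 2. apply Rmult_le_compat_l. lra. apply inv_le; lra. }
      lra.
    +
      assert (Hth : th <= 625/1000).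
      { apply Rle_trans with (Rpower 2 (- a)). exact Hth2.
        unfold Rpower. apply Rle_trans with (exp (- (6/10))). apply exp_le. nra.
        assert (1 + 3/10 <= exp (3/10)) by apply exp_ineq1_le.
        assert (exp (6/10) = exp (3/10) * exp (3/10)) by (rewrite <- exp_plus; f_equal; lra).
        rewrite exp_Ropp. replace (625/1000) with (/ (16/10)) by field. apply inv_le. lra. nra. }
      assert (HE1 : E <= 186/100 / 480).
      { apply Rle_trans with (Rpower 480 (- (9/10))).
        - unfold E, Rpower. apply exp_le.
          assert (ln 480 <= Lam).
          { rewrite <- (ln_exp Lam). left. apply ln_increasing; lra. }
          nra.
        - replace (- (9/10)) with (/ 10 + Ropp 1) by field. rewrite Rpower_plus, Rpower_Ropp, Rpower_1 by lra.
          assert (H := tenth480). unfold Rdiv. apply Rmult_le_compat_r. lra. lra. }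
      assert (HT3 : E * q / (1 - th) <= 186/100/480 * q * / (375/1000)).
      { unfold Rdiv at 1. apply Rmult_le_compat. nra. left; apply Rinv_0_lt_compat; lra.
        apply Rmult_le_compat_r; lra.
        apply inv_le; lra. }
      assert (Hql : l < (q - 1) / 20).
      { assert (0 < q - 1) by lra.
        apply Rmult_lt_reg_r with (exp Lam). apply exp_pos. rewrite HlL.
        apply Rmult_lt_reg_r with (20 / (q - 1)). apply Rdiv_lt_0_compat; lra.
        replace ((q - 1) / 20 * exp Lam * (20 / (q - 1))) with (exp Lam) by (field; lra).
        lra. }
      assert (Hlnl : - Lam < ln (q - 1) - ln 20).
      { replace (- Lam) with (ln l) by (unfold l; apply ln_exp).
        replace (ln (q - 1) - ln 20) with (ln ((q - 1) / 20)).
        apply ln_increasing; auto.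
        unfold Rdiv. rewrite ln_mult, ln_Rinv by lra. ring. }
      assert (Hlnt : ln t <= ln (q - 1)).
      { destruct (Req_dec t (q - 1)) as [e|e]. rewrite e; lra. left; apply ln_increasing; lra. }
      assert (Hy : (1 - a) * ln (3 / (2 * (1 - a))) <= 15/10 / (269/100)).
      { assert (Hy0 : 0 < 3 / (2 * (1 - a))) by (apply Rdiv_lt_0_compat; lra).
        assert (Hd := ln_le_div_e _ Hy0).
        assert (He := e_gt).
        assert ((1 - a) * ln (3 / (2 * (1 - a))) <= (1 - a) * (3 / (2 * (1 - a)) / exp 1)) by
          (apply Rmult_le_compat_l; lra).
        replace ((1 - a) * (3 / (2 * (1 - a)) / exp 1)) with (15/10 / exp 1) in H by (field; lra).
        apply Rle_trans with (15/10 / exp 1). exact H.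
        unfold Rdiv. apply Rmult_le_compat_l. lra. apply inv_le; lra. }
      assert (Hlt : ln (2 * (1 - a) / 3) <= ln t).
      { destruct (Req_dec (2 * (1 - a) / 3) t) as [e|e]. rewrite e; lra.
        left. apply ln_increasing. apply Rdiv_lt_0_compat; lra. unfold t. nra. }
      assert (Hinvln : ln (2 * (1 - a) / 3) = - ln (3 / (2 * (1 - a)))).
      { rewrite <- ln_Rinv. f_equal. field. lra. apply Rdiv_lt_0_compat; lra. }
      assert (HEq1 : E / (q - 1) <= exp (15/10/(269/100)) * Rpower 20 (- (9/10))).
      { unfold Rpower. rewrite <- exp_plus.
        replace (E / (q - 1)) with (exp (- a * Lam - ln (q - 1))).
        2:{ unfold Rminus at 1. rewrite exp_plus, exp_Ropp, exp_ln by lra. reflexivity. }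
        apply exp_le.
        assert (0 < ln 20) by (rewrite <- ln_1; apply ln_increasing; lra).
        nra. }
      assert (Hex : exp (15/10/(269/100)) <= 179/100).
      { apply Rle_trans with ((/ (1 - (15/10/(269/100)) / 8)) ^ 8). apply exp_upper8. lra.
        simpl. lra. }
      assert (H20 : Rpower 20 (- (9/10)) <= 135/100/20).
      { replace (- (9/10)) with (/ 10 + Ropp 1) by field. rewrite Rpower_plus, Rpower_Ropp, Rpower_1 by lra.
        assert (H := tenth20). unfold Rdiv. apply Rmult_le_compat_r. lra. lra. }
      assert (HEq2 : E / (q - 1) <= 179/100 * (135/100/20)).
      { apply Rle_trans with (exp (15/10/(269/100)) * Rpower 20 (- (9/10))). exact HEq1.
        apply Rmult_le_compat; try lra. left; apply exp_pos. left; apply Rpower_pos. }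
      assert (HT2' : E * q / (q - 1) <= 179/100 * (135/100/20) * q).
      { replace (E * q / (q - 1)) with (E / (q - 1) * q) by (field; lra).
        apply Rmult_le_compat_r; lra. }
      assert (H7 : 7 / 10 / q * q = 7/10) by (field; lra).
      assert (Hfin : 0 <= (1 - 480/6706 - 179/100 * (135/100/20) * q * (480/479) - 186/100/480 * q * / (375/1000)) * q - 7/10) by nra.
      assert (7/10/q <= 1 - 480/6706 - 179/100 * (135/100/20) * q * (480/479) - 186/100/480 * q * / (375/1000)).
      { apply Rmult_le_reg_r with q. lra. lra. }
      assert (E * q / (q - 1) * (480 / 479) <= 179/100 * (135/100/20) * q * (480/479)) by
        (apply Rmult_le_compat_r; lra).
      lra.
Qed.

Lemma numeric_main B a L : 2 <= B -> 0 < a < 1 ->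
  B ^ L > 20 / (Rpower B (1 - a) - 1) ->
  B ^ L > 40 * C_alpha a * Rpower B (2 * C_alpha a * (1 - a)) ->
  1 - / (2 * (1 - / B ^ L) * (B ^ 3 - 1))
    - Rpower B (- a) ^ L * Rpower B (1 - a) / ((Rpower B (1 - a) - 1) * (1 - / B ^ L))
    - Rpower B (- a) ^ L * Rpower B (1 - a) / (1 - Rpower B (- a))
  >= 7 / 10 / Rpower B (1 - a).
Proof.
  intros HB Ha H1 H2.
  assert (HBL : B ^ L = exp (INR L * ln B)).
  { rewrite <- exp_pow_INR, exp_ln by lra. reflexivity. }
  assert (HiBL : / B ^ L = exp (- (INR L * ln B))).
  { rewrite HBL, exp_Ropp. reflexivity. }
  assert (HE : Rpower B (- a) ^ L = exp (- a * (INR L * ln B))).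
  { unfold Rpower. rewrite exp_pow_INR. f_equal. ring. }
  rewrite HiBL, HE. unfold Rpower in *.
  assert (Hlb : ln 2 <= ln B).
  { destruct (Req_dec B 2) as [e|e]. rewrite e; lra. left; apply ln_increasing; lra. }
  assert (L2 := ln2_gt).
  assert (HC := C_gt a Ha).
  apply (numeric_core (ln B) a (INR L * ln B) (C_alpha a) (Xa a) (B ^ 3)).
  - exact Hlb.
  - exact Ha.
  - apply Rmult_le_pos. apply pos_INR. lra.
  - apply Rle_trans with (2 ^ 3). simpl; lra. apply pow_incr; lra.
  - exact HC.
  - apply aC_bound; exact Ha.
  - apply Xa_nonneg; lra.
  - apply Xa_ln; lra.
  - rewrite <- HBL. exact H1.
  - rewrite HBL in H2.
    assert (0 < 40 * C_alpha a * exp (2 * C_alpha a * (1 - a) * ln B)).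
    { apply Rmult_lt_0_compat. lra. apply exp_pos. }
    apply ln_increasing in H2; auto.
    rewrite ln_exp, ln_mult, ln_exp in H2 by (try apply exp_pos; lra).
    replace (2 * C_alpha a * ((1 - a) * ln B)) with (2 * C_alpha a * (1 - a) * ln B) by ring.
    lra.
Qed.

Lemma pow_ge_n B n : 2 <= B -> INR n + 1 <= B ^ n.
Proof.
  intros HB. induction n as [|n IH].
  - simpl. lra.
  - rewrite S_INR. simpl. assert (0 <= INR n) by apply pos_INR. nra.
Qed.

Lemma exists_K B c : 2 <= B -> 0 < c -> c <= 1 ->
  exists K : nat, B ^ K * c <= 1 < B ^ (S K) * c.
Proof.
  intros HB Hc Hc1.
  destruct (archimed (/ c)) as [A1 A2].
  assert (Hic : 0 < / c) by (apply Rinv_0_lt_compat; lra).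
  assert (Hm : (0 <= up (/ c))%Z).
  { apply le_IZR. lra. }
  set (n := Z.to_nat (up (/ c))).
  assert (Hn : INR n = IZR (up (/ c))).
  { unfold n. rewrite INR_IZR_INZ, Z2Nat.id; auto. }
  assert (Hbig : 1 < B ^ n * c).
  { assert (H := pow_ge_n B n HB).
    assert (/ c < B ^ n) by lra.
    apply Rmult_lt_compat_r with (r := c) in H0; auto. rewrite Rinv_l in H0; lra. }
  clear Hn. induction n as [|n IH].
  - simpl in Hbig. lra.
  - destruct (Rle_or_lt (B ^ n * c) 1) as [H|H].
    + exists n. split; auto.
    + apply IH. exact H.
Qed.

Lemma series_tail_lower (t : nat -> R) (th : R) (N : nat) : 0 < th < 1 ->
  (forall k, Rabs (t k) <= th ^ k) ->
  Series (fun k => t (N + k)%nat) >= - (th ^ N / (1 - th)).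
Proof.
  intros Hth Ht.
  assert (Hg : ex_series (fun k => th ^ N * th ^ k)).
  { apply (ex_series_scal_l (th ^ N) (fun k => th ^ k)).
    apply ex_series_geom. rewrite Rabs_pos_eq; lra. }
  assert (Hb : forall k, Rabs (t (N + k)%nat) <= th ^ N * th ^ k).
  { intros k. rewrite <- pow_add. apply Ht. }
  assert (He : ex_series (fun k => Rabs (t (N + k)%nat))).
  { apply (@ex_series_le R_AbsRing R_CompleteNormedModule _ (fun k => th ^ N * th ^ k)); auto.
    intros k. unfold norm; simpl. unfold abs; simpl. rewrite Rabs_Rabsolu. apply Hb. }
  assert (H1 := Series_Rabs _ He).
  assert (H2 : Series (fun k => Rabs (t (N + k)%nat)) <= Series (fun k => th ^ N * th ^ k)).
  { apply Series_le; auto. intros k. split. apply Rabs_pos. apply Hb. }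
  rewrite Series_scal_l, Series_geom in H2 by (rewrite Rabs_pos_eq; lra).
  assert (H3 := Rabs_le_between_Rmax (Series (fun k => t (N+k)%nat)) 0 0).
  apply Rabs_le_between in H1. unfold Rdiv. lra.
Qed.

Lemma sum_all_lower (t e : nat -> R) n : (forall k, t k >= - e k) ->
  sum_f_R0 t n >= - sum_f_R0 e n.
Proof.
  intros H. induction n as [|n IH]; simpl.
  - apply H.
  - specialize (H (S n)). lra.
Qed.

Lemma sum_main_lower (t e : nat -> R) (K0 : nat) (m : R) n :
  (forall k, t k >= - e k) -> t K0 >= m -> (K0 <= n)%nat ->
  sum_f_R0 t n >= m + e K0 - sum_f_R0 e n.
Proof.
  intros H HK. induction n as [|n IH]; intros Hn; simpl.
  - assert (K0 = 0)%nat by lia. subst. lra.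
  - destruct (Nat.eq_dec K0 (S n)) as [E|E].
    + subst. assert (A := sum_all_lower t e n H). lra.
    + assert (K0 <= n)%nat by lia. specialize (IH H0). specialize (H (S n)). lra.
Qed.

Theorem mainTheorem4 (b : nat) (alpha : R) (l0 : nat) :
  (2 <= b)%nat -> 0 < alpha < 1 ->
  INR b ^ l0 > Rmax (20 / (Rpower (INR b) (1 - alpha) - 1))
                    (40 * C_alpha alpha *
                     Rpower (INR b) (2 * C_alpha alpha * (1 - alpha))) ->
  forall x y : R, x < y -> y - x < / (INR b ^ (l0 + 1)) ->
  exists i : nat, (i < b ^ (l0 + 3))%nat /\
    Wfun alpha (INR b) (g_i b l0 i) y - Wfun alpha (INR b) (g_i b l0 i) x
    >= 7 / 10 * Rpower (INR b) (alpha * INR l0 - 2 * (1 - alpha))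
       * Rpower (y - x) alpha.
Proof.
  intros Hb Ha Hhyp x y Hxy Hd.
  assert (HB : 2 <= INR b).
  { replace 2 with (INR 2) by (simpl; lra). apply le_INR. exact Hb. }
  destruct (proj1 (Rmax_Rlt _ _ _) Hhyp) as [H1 H2].
  assert (NM := numeric_main (INR b) alpha l0 HB Ha H1 H2).
  set (B := INR b) in *.
  assert (HC := C_gt alpha Ha).
  assert (HRp : 1 <= Rpower B (2 * C_alpha alpha * (1 - alpha))).
  { apply Rle_trans with (Rpower B 0). rewrite Rpower_O; lra. apply Rle_Rpower. lra.
    apply Rmult_le_pos; [|lra]. lra. }
  assert (HBL : 480 < B ^ l0).
  { assert (40 * C_alpha alpha * 1 <= 40 * C_alpha alpha * Rpower B (2 * C_alpha alpha * (1 - alpha)))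
      by (apply Rmult_le_compat_l; lra). lra. }
  set (l := / B ^ l0) in *.
  assert (Hl0 : 0 < l) by (apply Rinv_0_lt_compat; lra).
  assert (Hl1 : l < / 480) by (apply Rinv_lt_contravar; nra).
  assert (HlB : l * B ^ l0 = 1) by (unfold l; field; lra).
  set (d := y - x) in *.
  assert (Hd0 : 0 < d) by (unfold d; lra).
  assert (HBL1 : B ^ (l0 + 1) = B ^ l0 * B) by (rewrite pow_add; simpl; ring).
  set (c := d * B ^ l0).
  assert (Hc0 : 0 < c) by (unfold c; nra).
  assert (HcB : c * B < 1).
  { unfold c. rewrite HBL1 in Hd.
    apply Rmult_lt_compat_r with (r := B ^ l0 * B) in Hd; [|nra].
    rewrite Rinv_l in Hd by nra. nra. }
  assert (Hc1 : c <= 1) by nra.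
  destruct (exists_K B c HB Hc0 Hc1) as [K0 [HK1 HK2]].
  set (rho := B ^ K0 * c) in *.
  assert (HBK : 0 < B ^ K0) by (apply pow_lt; lra).
  assert (Hrho0 : 0 < rho) by (unfold rho; nra).
  assert (HrhoB : 1 < B * rho) by (unfold rho; simpl in HK2; lra).
  set (D := B ^ K0 * d).
  assert (HD : D = rho * l).
  { unfold D, rho, c. replace l with (/ B ^ l0) by reflexivity. field. lra. }
  set (u := B ^ K0 * x). set (v := B ^ K0 * y).
  assert (Huv : v - u = D) by (unfold u, v, D, d; ring).
  set (N3 := (b ^ (l0 + 3))%nat).
  set (NR := INR N3).
  assert (HNR : NR = B ^ l0 * B ^ 3) by (unfold NR, N3; rewrite pow_INR, pow_add; reflexivity).
  assert (HB3 : 8 <= B ^ 3) by (apply Rle_trans with (2 ^ 3); [simpl; lra| apply pow_incr; lra]).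
  assert (HNR0 : 0 < NR) by (rewrite HNR; nra).
  set (h := / NR).
  assert (Hh : h = l / B ^ 3) by (unfold h, l; rewrite HNR; field; lra).
  set (c0 := u - (l - D) / 2).
  destruct (archimed (NR * c0 + / 2)) as [Z1 Z2].
  set (z := (up (NR * c0 + / 2) - 1)%Z).
  assert (Hz1 : IZR z <= NR * c0 + / 2) by (unfold z; rewrite minus_IZR; simpl; lra).
  assert (Hz2 : NR * c0 + / 2 < IZR z + 1) by (unfold z; rewrite minus_IZR; simpl; lra).
  set (Zn := Z.of_nat N3).
  assert (HN3 : (0 < N3)%nat) by (apply INR_lt; simpl; fold NR; lra).
  assert (HZn : (0 < Zn)%Z) by (unfold Zn; lia).
  set (i := Z.to_nat (z mod Zn)).
  set (n := (z / Zn)%Z).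
  assert (Hdm := Z.div_mod z Zn ltac:(lia)).
  assert (Hmod := Z.mod_pos_bound z Zn HZn).
  assert (Hi : INR i = IZR (z mod Zn)) by (unfold i; rewrite INR_IZR_INZ, Z2Nat.id; [reflexivity | lia]).
  assert (HIZn : IZR Zn = NR) by (unfold Zn, NR; rewrite INR_IZR_INZ; reflexivity).
  assert (Hzdec : IZR z = NR * IZR n + INR i).
  { rewrite Hi, <- HIZn, <- mult_IZR, <- plus_IZR. f_equal. exact Hdm. }
  exists i. split.
  { unfold i. apply Nat2Z.inj_lt. rewrite Z2Nat.id by lia. fold Zn. lia. }
  set (G := g_i b l0 i).
  assert (Hell : ell b l0 = l) by reflexivity.
  assert (Hl01 : 0 < ell b l0 < 1) by (rewrite Hell; lra).
  set (p := rr b l0 i + IZR n).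
  assert (Hp : p = IZR z / NR).
  { unfold p, rr. fold B. rewrite Hzdec.
    replace (B ^ (l0 + 3)) with NR by (rewrite HNR, pow_add; reflexivity). field. lra. }
  assert (Hp1 : p <= c0 + h / 2).
  { rewrite Hp. unfold h. apply Rmult_le_reg_r with NR; auto.
    replace (IZR z / NR * NR) with (IZR z) by (field; lra).
    replace ((c0 + / NR / 2) * NR) with (NR * c0 + / 2) by (field; lra). lra. }
  assert (Hp2 : c0 - h / 2 < p).
  { rewrite Hp. unfold h. apply Rmult_lt_reg_r with NR; auto.
    replace (IZR z / NR * NR) with (IZR z) by (field; lra).
    replace ((c0 - / NR / 2) * NR) with (NR * c0 + / 2 - 1) by (field; lra). lra. }
  assert (Hrho1 : rho <= 1) by exact HK1.
  assert (HDl : D <= l) by (rewrite HD; nra).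
  assert (HD0 : 0 < D) by (rewrite HD; nra).
  assert (HB3l : B ^ 3 * h = l) by (rewrite Hh; field; lra).
  set (R4 := / (2 * (1 - l) * (B ^ 3 - 1))).
  assert (HR40 : 0 < R4) by (unfold R4; apply Rinv_0_lt_compat; nra).
  assert (Hmain : G v - G u >= rho * (1 - R4)).
  { assert (Hs : forall a c, a <= c -> G c - G a >= - (c - a) / (1 - l)).
    { intros a' c' H. rewrite <- Hell. apply gi_slope; auto. }
    assert (Hst : forall t, p <= t <= p + l -> G t = (t - p) / l - / 2).
    { intros t Ht. rewrite <- Hell. apply gi_steep; auto. }
    assert (Hrl : D / l = rho) by (rewrite HD; field; lra).
    destruct (Rle_or_lt h (l - D)) as [Ce|Ce].
    - assert (M := main_abs G l p u v 0 ltac:(lra) Hs Hst ltac:(lra) ltac:(lra) ltac:(lra)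
                 ltac:(unfold c0 in Hp1; lra) ltac:(unfold c0 in Hp2; lra)).
      rewrite Huv, Hrl in M. nra.
    - set (e := (h - (l - D)) / 2).
      assert (M := main_abs G l p u v e ltac:(lra) Hs Hst ltac:(lra) ltac:(lra) ltac:(unfold e; lra)
                 ltac:(unfold e, c0 in *; lra) ltac:(unfold e, c0 in *; lra)).
      rewrite Huv, Hrl in M.
      assert (Hlam : / l + / (1 - l) = / (l * (1 - l))) by (field; lra).
      assert (Hlam0 : 0 < / (l * (1 - l))) by (apply Rinv_0_lt_compat; nra).
      assert (He1 : e * (/ l + / (1 - l)) <= h / 2 * / (l * (1 - l))).
      { rewrite Hlam. apply Rmult_le_compat_r; unfold e; lra. }
      assert (He2 : h / 2 * / (l * (1 - l)) = / (2 * B ^ 3 * (1 - l))).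
      { rewrite Hh. field. lra. }
      assert (Hrho2 : 1 - / B ^ 3 <= rho).
      { assert (l - h < D) by lra. rewrite HD, Hh in H.
        apply Rmult_le_reg_r with l; auto. replace ((1 - / B ^ 3) * l) with (l - l / B ^ 3) by (field; lra).
        lra. }
      assert (He3 : (1 - / B ^ 3) * R4 = / (2 * B ^ 3 * (1 - l))).
      { unfold R4. field. split; lra. }
      assert ((1 - / B ^ 3) * R4 <= rho * R4) by (apply Rmult_le_compat_r; lra).
      lra. }
  set (th := Rpower B (- alpha)).
  assert (Hth0 : 0 < th) by apply Rpower_pos.
  assert (Hth1 : th < 1).
  { unfold th. apply Rlt_le_trans with (Rpower B 0). apply Rpower_lt; lra. rewrite Rpower_O; lra. }
  assert (Hthk : forall k, Rpower B (- alpha * INR k) = th ^ k).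
  { intros k. unfold th. rewrite <- Rpower_pow by apply Rpower_pos.
    rewrite Rpower_mult. reflexivity. }
  set (q := Rpower B (1 - alpha)) in *.
  assert (Hq : q = th * B).
  { unfold q, th. replace (1 - alpha) with (- alpha + 1) by ring.
    rewrite Rpower_plus, Rpower_1 by lra. reflexivity. }
  assert (Hq1 : 1 < q).
  { unfold q. apply Rle_lt_trans with (Rpower B 0). rewrite Rpower_O; lra. apply Rpower_lt; lra. }
  assert (HGb : forall s, Rabs (G s) <= / 2) by (intros s; apply gi_bound; auto).
  set (a := fun w k => Rpower B (- alpha * INR k) * G (B ^ k * w)).
  assert (Hab : forall w k, Rabs (a w k) <= th ^ k * / 2).
  { intros w k. unfold a. rewrite Hthk, Rabs_mult, Rabs_pos_eq by (apply pow_le; lra).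
    apply Rmult_le_compat_l. apply pow_le; lra. apply HGb. }
  assert (Hgeom : ex_series (fun k => th ^ k)) by (apply ex_series_geom; rewrite Rabs_pos_eq; lra).
  assert (Hexa : forall w, ex_series (a w)).
  { intros w. apply (@ex_series_le R_AbsRing R_CompleteNormedModule _ (fun k => th ^ k)); auto.
    intros k. unfold norm; simpl. unfold abs; simpl. specialize (Hab w k).
    assert (0 <= th ^ k) by (apply pow_le; lra). lra. }
  set (t := fun k => a y k - a x k).
  assert (HW : Wfun alpha B G y - Wfun alpha B G x = Series t).
  { unfold Wfun, t. rewrite Series_minus; auto. }
  assert (Htabs : forall k, Rabs (t k) <= th ^ k).
  { intros k. unfold t. assert (Hab1 := Hab y k). assert (Hab2 := Hab x k).
    assert (H := Rabs_triang (a y k) (- a x k)). rewrite Rabs_Ropp in H.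
    unfold Rminus. lra. }
  assert (Hext : ex_series t).
  { apply (@ex_series_le R_AbsRing R_CompleteNormedModule _ (fun k => th ^ k)); auto.
  }
  set (ek := fun k => q ^ k * d / (1 - l)).
  assert (Htlow : forall k, t k >= - ek k).
  { intros k. unfold t, a, ek. rewrite Hthk.
    assert (Hsl := gi_slope b l0 i (B ^ k * x) (B ^ k * y) Hl01).
    fold G in Hsl. rewrite Hell in Hsl.
    assert (HBk : 0 < B ^ k) by (apply pow_lt; lra).
    specialize (Hsl ltac:(nra)).
    replace (B ^ k * y - B ^ k * x) with (B ^ k * d) in Hsl by (unfold d; ring).
    rewrite Hq, Rpow_mult_distr.
    assert (0 <= th ^ k) by (apply pow_le; lra).
    assert (th ^ k * (G (B ^ k * y) - G (B ^ k * x)) >= th ^ k * (- (B ^ k * d) / (1 - l))).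
    { apply Rmult_ge_compat_l; lra. }
    replace (th ^ k * B ^ k * d / (1 - l)) with (- (th ^ k * (- (B ^ k * d) / (1 - l)))) by (field; lra).
    lra. }
  assert (HtK0 : t K0 >= th ^ K0 * (rho * (1 - R4))).
  { unfold t, a. rewrite Hthk. fold u v.
    replace (th ^ K0 * G v - th ^ K0 * G u) with (th ^ K0 * (G v - G u)) by ring.
    apply Rmult_ge_compat_l. left; apply pow_lt; lra. exact Hmain. }
  set (N := S (K0 + l0)).
  rewrite HW, (Series_incr_n t N) by (unfold N; lia || auto).
  simpl (Init.Nat.pred N).
  assert (Hsum := sum_main_lower t ek K0 (th ^ K0 * (rho * (1 - R4))) (K0 + l0) Htlow HtK0 ltac:(lia)).
  assert (Htail := series_tail_lower t th N ltac:(lra) Htabs).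
  set (E := th ^ l0) in *.
  assert (HE0 : 0 < E) by (unfold E; apply pow_lt; lra).
  set (P := th ^ K0 * rho).
  assert (HP0 : 0 < P) by (unfold P; apply Rmult_lt_0_compat; [apply pow_lt|]; lra).
  assert (Hpow : forall m, B ^ m * th ^ m = q ^ m).
  { intros m. rewrite Hq, Rpow_mult_distr. ring. }
  assert (HS1 : sum_f_R0 ek (K0 + l0) <= d * q ^ N / ((q - 1) * (1 - l))).
  { assert (Hse : sum_f_R0 ek (K0 + l0) = d / (1 - l) * sum_f_R0 (fun k => q ^ k) (K0 + l0)).
    { rewrite scal_sum. apply sum_eq. intros k _. unfold ek. field. lra. }
    assert (Hgp := GP_finite q (K0 + l0)).
    replace (K0 + l0 + 1)%nat with N in Hgp by (unfold N; lia).
    assert (Hsg : sum_f_R0 (fun k => q ^ k) (K0 + l0) = (q ^ N - 1) / (q - 1)).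
    { apply Rmult_eq_reg_r with (q - 1). rewrite Hgp. field. lra. lra. }
    rewrite Hse, Hsg.
    assert (0 < d / (1 - l)) by (apply Rdiv_lt_0_compat; lra).
    assert ((q ^ N - 1) / (q - 1) <= q ^ N / (q - 1)).
    { unfold Rdiv. apply Rmult_le_compat_r. left; apply Rinv_0_lt_compat; lra. lra. }
    replace (d * q ^ N / ((q - 1) * (1 - l))) with (d / (1 - l) * (q ^ N / (q - 1))) by (field; lra).
    apply Rmult_le_compat_l; lra. }
  assert (HS2 : 0 <= ek K0).
  { unfold ek. apply Rdiv_le_0_compat; [|lra]. apply Rmult_le_pos; [apply pow_le|]; lra. }
  assert (HS3 : d * q ^ N = P * (E * q)).
  { unfold P, E, rho, c, N. rewrite <- !Hpow.
    replace (S (K0 + l0)) with (K0 + l0 + 1)%nat by lia. rewrite !pow_add. rewrite Hq. simpl. ring. }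
  assert (HS4 : th ^ N <= P * (E * q)).
  { unfold P, E, N. rewrite Hq. replace (S (K0 + l0)) with (K0 + l0 + 1)%nat by lia.
    rewrite !pow_add. simpl pow.
    assert (0 < th ^ K0 * th ^ l0 * th) by (apply Rmult_lt_0_compat; [apply Rmult_lt_0_compat; apply pow_lt|]; lra).
    nra. }
  assert (HZ : 7 / 10 / q <= 1 - R4 - E * q / ((q - 1) * (1 - l)) - E * q / (1 - th)).
  { change (Rpower B (- alpha)) with th in NM. change (th ^ l0) with E in NM. unfold R4. lra. }
  assert (Hlow : sum_f_R0 t (K0 + l0) + Series (fun k => t (N + k)%nat) >= P * (7 / 10 / q)).
  { assert (A1 : d * q ^ N / ((q - 1) * (1 - l)) = P * (E * q / ((q - 1) * (1 - l)))).
    { rewrite HS3. field. lra. }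
    assert (A2 : th ^ N / (1 - th) <= P * (E * q / (1 - th))).
    { replace (P * (E * q / (1 - th))) with (P * (E * q) / (1 - th)) by (field; lra).
      unfold Rdiv. apply Rmult_le_compat_r. left; apply Rinv_0_lt_compat; lra. exact HS4. }
    assert (A3 : P * (7 / 10 / q) <= P * (1 - R4 - E * q / ((q - 1) * (1 - l)) - E * q / (1 - th)))
      by (apply Rmult_le_compat_l; lra).
    assert (A4 : th ^ K0 * (rho * (1 - R4)) = P * (1 - R4)) by (unfold P; ring).
    lra. }
  assert (Hdr : d = rho / (B ^ K0 * B ^ l0)) by (unfold rho, c; field; split; lra).
  assert (HBl0 : 0 < B ^ l0) by lra.
  assert (Hlnd : ln d = ln rho - INR K0 * ln B - INR l0 * ln B).
  { rewrite Hdr. unfold Rdiv. rewrite ln_mult, ln_Rinv, ln_mult, !ln_pow by (try apply Rinv_0_lt_compat; try apply Rmult_lt_0_compat; lra).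
    ring. }
  assert (Htg : 7 / 10 * Rpower B (alpha * INR l0 - 2 * (1 - alpha)) * Rpower d alpha
          = 7 / 10 * exp (alpha * ln rho - alpha * INR K0 * ln B - 2 * (1 - alpha) * ln B)).
  { unfold Rpower. rewrite Hlnd. rewrite Rmult_assoc, <- exp_plus. f_equal. f_equal. ring. }
  assert (HPe : P * (7 / 10 / q) = 7 / 10 * exp (ln rho - alpha * INR K0 * ln B - (1 - alpha) * ln B)).
  { unfold P, th, q. unfold Rpower. rewrite exp_pow_INR.
    replace (ln rho - alpha * INR K0 * ln B - (1 - alpha) * ln B) with
      (INR K0 * (- alpha * ln B) + ln rho + - ((1 - alpha) * ln B)) by ring.
    rewrite !exp_plus, exp_ln, exp_Ropp by lra. field. apply Rgt_not_eq, exp_pos. }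
  assert (HlnBr : 0 < ln rho + ln B).
  { rewrite <- ln_mult by lra. rewrite <- ln_1. apply ln_increasing; lra. }
  assert (Hfin : 7 / 10 * Rpower B (alpha * INR l0 - 2 * (1 - alpha)) * Rpower d alpha <= P * (7 / 10 / q)).
  { rewrite Htg, HPe. apply Rmult_le_compat_l. lra. apply exp_le.
    assert (0 <= (1 - alpha) * (ln rho + ln B)) by (apply Rmult_le_pos; lra). nra. }
  lra.
Qed.
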